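(* Let $a\geq 3$ and $m\geq 2a^2-a+2$ be integers. Every 2-coloring of $[C(m,a)]$ (with colors red and blue) in which both $a-2$ and $a-1$ are red admits a monochromatic solution of $L(m,a)$ in $[C(m,a)]$.
   Context: For integers $m\geq 3$, $a\geq 1$, $L(m,a)$ denotes the equation $x_1+x_2+\cdots+x_{m-1}=a x_m$. For a positive integer $n$, $[n]=\{1,\dots,n\}$. A solution of $L(m,a)$ in $[n]$ is an $m$-tuple $(x_1,\dots,x_m)\in[n]^m$ (entries not necessarily distinct) satisfying the equation; given a 2-coloring of $[n]$, it is monochromatic if all $x_i$ have the same color. $C(m,a)$ denotes $\left\lceil \frac{m-1}{a}\left\lceil \frac{m-1}{a}\right\rceil\right\rceil$. *)

(* Defs.v *)
From mathcomp Require Import all_boot.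
Unset Printing Implicit Defensive.

Definition ceil_div (p d : nat) : nat := (p + d.-1) %/ d.

Definition Cma (m a : nat) : nat := ceil_div ((m - 1) * ceil_div (m - 1) a) a.

(* x : 'I_m -> nat is a solution of L(m,a) in [n]:
   x_1 + ... + x_{m-1} = a * x_m  (indices shifted to 0..m-1), all entries in [1,n] *)
Definition is_solution (m a n : nat) (x : 'I_m -> nat) : Prop :=
  (forall i, 1 <= x i <= n) /\
  \sum_(i < m | (i : nat) < m - 1) x i = a * (\sum_(i < m | (i : nat) == m - 1) x i).

(* a 2-coloring is a function col : nat -> bool (true = red, false = blue);
   only its values on [n] matter. *)
Definition monochromatic (m : nat) (col : nat -> bool) (x : 'I_m -> nat) : Prop :=
  forall i j, col (x i) = col (x j).

(* Main.v *)
Require Import Defs.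
From mathcomp Require Import all_boot.
From mathcomp Require Import zify.
From Stdlib Require Import Classical.

Lemma sum_ord_nth (s : seq nat) : \sum_(i < size s) nth 0 s i = sumn s.
Proof.
elim: s => [|x s IH]; first by rewrite big_ord0.
by rewrite /= big_ord_recl /= IH.
Qed.

Lemma good_sol m a n (col : nat -> bool) (s : seq nat) t :
  size s = m.-1 -> 0 < m ->
  (forall x, x \in s -> 1 <= x <= n /\ col x = col t) -> 1 <= t <= n ->
  sumn s = a * t ->
  exists x : 'I_m -> nat, is_solution m a n x /\ monochromatic m col x.
Proof.
case: m => [|k] //= Hs _ Hall Ht Hsum.
have key : forall i : 'I_k.+1, 1 <= (if (i : nat) < k.+1 - 1 then nth 0 s i else t) <= n
   /\ col (if (i : nat) < k.+1 - 1 then nth 0 s i else t) = col t.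
  move=> i; case: ifP => Hi; last by split.
  apply: Hall; apply: mem_nth; rewrite Hs; lia.
exists (fun i : 'I_k.+1 => if (i : nat) < k.+1 - 1 then nth 0 s i else t).
split; first split.
- by move=> i; case: (key i).
- rewrite subn1 /=.
  rewrite big_mkcond big_ord_recr /= ltnn addn0.
  rewrite [in RHS]big_mkcond big_ord_recr /= eqxx ltnn.
  rewrite [X in _ = a * (X + _)]big1 ?add0n; last first.
    by move=> i _; rewrite /= (ltn_eqF (ltn_ord i)).
  rewrite -Hsum -sum_ord_nth Hs.
  by apply: eq_bigr => i _; rewrite /= ltn_ord.
- by move=> i j; rewrite (proj2 (key i)) (proj2 (key j)).
Qed.

Lemma interval_sum N lo hi S : lo <= hi -> N * lo <= S <= N * hi ->
  exists s : seq nat, size s = N /\ (forall x, x \in s -> lo <= x <= hi) /\ sumn s = S.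
Proof.
move=> Hlh; elim: N S => [|N IH] S HS.
  exists [::]; split => //; split => //=; rewrite !mul0n in HS; lia.
rewrite !mulSn in HS.
have [s [Hs1 [Hs2 Hs3]]] := IH (S - minn hi (S - N * lo)) ltac:(have := leq_mul (leqnn N) Hlh; lia).
exists (minn hi (S - N * lo) :: s); split; first by rewrite /= Hs1.
split; last by rewrite /= Hs3; lia.
move=> x; rewrite inE => /orP [/eqP -> | /Hs2 //]; lia.
Qed.

Lemma ceil_div_bounds p d : 0 < d -> p <= ceil_div p d * d <= p + d.-1.
Proof.
move=> Hd; rewrite /ceil_div.
have := divn_eq (p + d.-1) d; have := ltn_pmod (p + d.-1) Hd; lia.
Qed.

Lemma aux1 a k : 3 <= a -> 2*(a*a) - a + 1 <= k -> (a-2)*(k+a-3) <= (k-2)*(a-1).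
Proof.
move=> Ha Hk.
have [p Ep] : exists p, a = p + 3 by exists (a - 3); lia.
subst a.
have [q Eq] : exists q, k = q + 2 by exists (k - 2); nia.
subst k.
have -> : p + 3 - 2 = p + 1 by lia.
have -> : q + 2 + (p + 3) - 3 = q + p + 2 by lia.
have -> : q + 2 - 2 = q by lia.
have -> : p + 3 - 1 = p + 2 by lia.
have : 2 * ((p+3)*(p+3)) <= q + p + 4 by have := @leq_pmulr (p+3) (p+3); rewrite addn_gt0 orbT; lia.
nia.
Qed.
Lemma aux2 a k v : 3 <= a -> 2*(a*a) - a + 1 <= k -> a <= v ->
  (a-2)*((k-1)*v + (k + a - 3)) <= a*((k-2)*(v-1)).
Proof.
move=> Ha Hk Hv.
have [p Ep] : exists p, a = p + 3 by exists (a - 3); lia.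
subst a.
have [q Eq] : exists q, k = q + 2 by exists (k - 2); nia.
have [w Ew] : exists w, v = p + 3 + w by exists (v - (p+3)); lia.
subst k v.
have -> : p + 3 - 2 = p + 1 by lia.
have -> : q + 2 + (p + 3) - 3 = q + p + 2 by lia.
have -> : q + 2 - 2 = q by lia.
have -> : q + 2 - 1 = q + 1 by lia.
have -> : p + 3 + w - 1 = p + 2 + w by lia.
have : 2 * ((p+3)*(p+3)) <= q + p + 4 by have := @leq_pmulr (p+3) (p+3); rewrite addn_gt0 orbT; lia.
nia.
Qed.
Lemma aux4 a k c n : 3 <= a -> 2*(a*a) - a + 1 <= k -> 2 * a <= c -> c * a <= k + a - 1 ->
  n * a <= k * c + a - 1 -> (a-1)*n <= (k-1)*(c-1).
Proof.
move=> Ha Hk Hc Hca Hn.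
rewrite -(@leq_pmul2l a); last lia.
have -> : a * ((a - 1) * n) = (a - 1) * (n * a) by rewrite mulnCA (mulnC a).
apply: (@leq_trans ((a-1) * (k * c + a - 1))); first by rewrite leq_mul2l Hn orbT.
have [p Ep] : exists p, a = p + 3 by exists (a - 3); lia.
subst a.
have [q Eq] : exists q, k = q + 1 by exists (k - 1); nia.
have [r Er] : exists r, c = r + 1 by exists (c - 1); lia.
subst k c.
have -> : p + 3 - 1 = p + 2 by lia.
have -> : q + 1 - 1 = q by lia.
have -> : r + 1 - 1 = r by lia.
have -> : (q + 1) * (r + 1) + (p + 3) - 1 = (q + 1) * (r + 1) + (p + 2) by lia.
have Hr : 2 * p + 5 <= r by lia.
have Hq : (p + 3) * r <= q by nia.
have Hq2 : 2 * ((p+3)*(p+3)) <= q + p + 3 by have := @leq_pmulr (p+3) (p+3); rewrite addn_gt0 orbT; lia.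
nia.
Qed.

Lemma aux5 a k b : 3 <= a -> 2*(a*a) - a + 1 <= k -> 1 <= b -> b <= a -> k*(a-2) <= a*(k-a+b).
Proof.
move=> Ha Hk Hb1 Hb2.
have [p Ep] : exists p, a = p + 3 by exists (a - 3); lia.
subst a.
have [q Eq] : exists q, k = q + p + 3 by exists (k - (p+3)); nia.
have [e Ee] : exists e, b = e + 1 by exists (b - 1); lia.
subst k b.
have -> : p + 3 - 2 = p + 1 by lia.
have -> : q + p + 3 - (p + 3) + (e + 1) = q + e + 1 by lia.
have Hq2 : 2 * ((p+3)*(p+3)) <= q + 2 * p + 5 by have := @leq_pmulr (p+3) (p+3); rewrite addn_gt0 orbT; lia.
nia.
Qed.

Lemma predmul k c : 0 < k -> 0 < c -> (k - 1) * (c - 1) + k + c = k * c + 1.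
Proof.
case: k => [|k] // _; case: c => [|c] // _.
rewrite !subSS !subn0 !mulSn !mulnS; lia.
Qed.

Theorem proposition3 (a m : nat) (col : nat -> bool) :
  3 <= a -> 2 * a ^ 2 - a + 2 <= m ->
  col (a - 2) = true -> col (a - 1) = true ->
  exists x : 'I_m -> nat,
    is_solution m a (Cma m a) x /\ monochromatic m col x.
Proof.
move=> Ha Hm Hr1 Hr2.
apply: NNPP => NS.
rewrite /Cma in NS.
have Ha2 : a ^ 2 = a * a by rewrite expnS expn1.
rewrite Ha2 in Hm.
have Ha0 : 0 < a by lia.
set k := m - 1 in NS.
have Hmk : m.-1 = k by rewrite /k; lia.
have Hk : 2 * (a * a) - a + 1 <= k by rewrite /k; lia.
set c := ceil_div k a in NS.
have Hc := ceil_div_bounds k a Ha0.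
rewrite -/c in Hc.
set n := ceil_div (k * c) a in NS.
have Hn := ceil_div_bounds (k * c) a Ha0.
rewrite -/n in Hn.
clearbody n c.
have noG : forall s t, size s = k -> (forall x, x \in s -> 1 <= x <= n /\ col x = col t) ->
   1 <= t <= n -> sumn s = a * t -> False.
  move=> s t H1 H2 H3 H4; apply: NS; apply: (@good_sol m a n col s t) => //.
    by rewrite H1 Hmk.
  lia.
clearbody k; clear NS Hmk.
have Hc2a : 2 * a <= c by timeout 120 nia.
have Hn2k : 2 * k <= n by timeout 120 nia.
have R : forall lo hi i y, 1 <= lo -> lo <= hi -> hi <= n ->
    (forall x, lo <= x <= hi -> col x = col y) -> 1 <= y <= n -> i <= a ->
    (k - i) * lo <= (a - i) * y <= (k - i) * hi -> False.
  move=> lo hi i y H1 H2 H3 Hcol Hy Hi Hineq.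
  have [s [S1 [S2 S3]]] := interval_sum (k - i) lo hi ((a - i) * y) H2 Hineq.
  apply: (noG (nseq i y ++ s) y).
  - rewrite size_cat size_nseq S1; lia.
  - move=> x; rewrite mem_cat => /orP [].
      by rewrite mem_nseq => /andP [_ /eqP ->].
    move/S2 => Hx; split; first lia.
    by apply: Hcol.
  - done.
  - by rewrite sumn_cat sumn_nseq S3 mulnC -mulnDl subnKC.
have C1 : forall d v, a - 2 <= v -> v < a - 2 + d -> v <= c - 1 -> col v = true.
  elim=> [|d IH] v Hv1 Hv2 Hv3; first lia.
  case: (ltnP v (a - 2 + d)) => Hv; first exact: IH.
  case: (leqP v (a - 1)) => Hva.
    have : v = a - 2 \/ v = a - 1 by lia.
    by case=> ->.
  case Hcv: (col v) => //; exfalso.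
  have run : forall x, a - 2 <= x <= v - 1 -> col x = true.
    by move=> x Hx; apply: IH; lia.
  have Hy := ceil_div_bounds ((k - 1) * v + (k - 2)) a Ha0.
  set y := ceil_div _ a in Hy.
  clearbody y.
  set z := y * a - (k - 1) * v.
  have Hyz : (k - 1) * v + z = y * a by rewrite /z; lia.
  have Hz1 : k - 2 <= z by rewrite /z; lia.
  have Hz2 : z <= k + a - 3 by rewrite /z; lia.
  clearbody z.
  have Hy1 : k - 1 <= y by timeout 120 nia.
  have Hyn : y <= n.
    have H1 : (k - 1) * v <= (k - 1) * (c - 1) by apply: leq_mul.
    have E : (k - 1) * (c - 1) + k + c = k * c + 1.
      apply: predmul; lia.
    have : y * a <= n * a by lia.
    by rewrite leq_pmul2r.
  have Hcz : col z = false.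
    case Hcz: (col z) => //; exfalso.
    apply: (R (a - 2) (v - 1) 2 z); try lia.
      by move=> x Hx; rewrite Hcz; apply: run.
    apply/andP; split.
      by rewrite mulnC; apply: leq_mul; lia.
    apply: (@leq_trans ((a - 2) * (k + a - 3))); first by rewrite leq_mul2l Hz2 orbT.
    apply: (leq_trans (@aux1 a k Ha Hk)).
    rewrite leq_mul2l; apply/orP; right; lia.
  have Hcy : col y = false.
    case Hcy: (col y) => //; exfalso.
    apply: (R (a - 2) (v - 1) 2 y); try lia.
      by move=> x Hx; rewrite Hcy; apply: run.
    apply/andP; split.
      by rewrite mulnC; apply: leq_mul; lia.
    rewrite -(@leq_pmul2l a) //.
    have -> : a * ((a - 2) * y) = (a - 2) * (y * a) by rewrite mulnCA (mulnC a).
    rewrite -Hyz.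
    apply: (@leq_trans ((a - 2) * ((k - 1) * v + (k + a - 3)))).
      by rewrite leq_mul2l leq_add2l Hz2 orbT.
    apply: aux2 => //; lia.
  apply: (noG (nseq (k - 1) v ++ [:: z]) y).
  - rewrite size_cat size_nseq /=; lia.
  - move=> x; rewrite mem_cat => /orP [].
      rewrite mem_nseq => /andP [_ /eqP ->]; split; [lia | by rewrite Hcv Hcy].
    rewrite inE => /eqP ->; split; [lia | by rewrite Hcz Hcy].
  - lia.
  - by rewrite sumn_cat sumn_nseq /= addn0 mulnC Hyz mulnC.
have C1' : forall x, a - 2 <= x <= c - 1 -> col x = true.
  move=> x Hx; apply: (C1 c); lia.
have Hkc : 2 * k <= k * (c - 1).
  by rewrite mulnC leq_mul2l; apply/orP; right; lia.
have C2 : forall b, 1 <= b <= a - 3 -> col b = true.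
  move=> b Hb; case Hcb: (col b) => //; exfalso.
  have Hcy : col (k - a + b) = false.
    case Hcy: (col (k - a + b)) => //; exfalso.
    apply: (R (a - 2) (c - 1) 0 (k - a + b)); try lia.
      by move=> x Hx; rewrite Hcy; apply: C1'.
    rewrite ?subn0; apply/andP; split.
      by apply: aux5 => //; lia.
    apply: (@leq_trans (a * k)); first by rewrite leq_mul2l; apply/orP; right; lia.
    by rewrite mulnC leq_mul2l; apply/orP; right; lia.
  set y := k - a + b in Hcy *.
  apply: (noG (nseq (a - b) y ++ nseq y b) y).
  - rewrite size_cat !size_nseq /y; lia.
  - move=> x; rewrite mem_cat => /orP [].
      rewrite mem_nseq => /andP [_ /eqP ->]; split => //; rewrite /y; lia.
    rewrite mem_nseq => /andP [_ /eqP ->]; split; [lia | by rewrite Hcb Hcy].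
  - rewrite /y; lia.
  - rewrite sumn_cat !sumn_nseq (mulnC b) -mulnDr subnK ?(mulnC a) //; lia.
have Call : forall x, 1 <= x <= c - 1 -> col x = true.
  move=> x Hx; case: (leqP x (a - 3)) => Hx3.
    by apply: C2; lia.
  by apply: C1'; lia.
have Hcc : col c = false.
  case Hcc: (col c) => //; exfalso.
  apply: (R 1 (c - 1) 0 c); try lia.
    by move=> x Hx; rewrite Hcc; apply: Call.
have Hcc1 : col (c + 1) = false.
  case Hcc1: (col (c + 1)) => //; exfalso.
  apply: (R 1 (c - 1) 0 (c + 1)); try lia.
    by move=> x Hx; rewrite Hcc1; apply: Call.
have Hcn : col n = false.
  case Hcn: (col n) => //; exfalso.
  apply: (R 1 (c - 1) 1 n); try lia.
    by move=> x Hx; rewrite Hcn; apply: Call.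
  rewrite muln1; apply/andP; split.
    have : n <= (a - 1) * n by rewrite leq_pmull; lia.
    lia.
  apply: aux4 => //; lia.
have Hak : a < k by have := @leq_pmulr a a Ha0; lia.
have Hcn1 : c + 1 <= n by have := @leq_pmulr c a Ha0; lia.
set r := n * a - k * c.
have Hr : r <= a - 1 by rewrite /r; lia.
apply: (noG (nseq (k - r) c ++ nseq r (c + 1)) n).
- rewrite size_cat !size_nseq; lia.
- move=> x; rewrite mem_cat => /orP [].
    rewrite mem_nseq => /andP [_ /eqP ->]; split; [lia | by rewrite Hcc Hcn].
  rewrite mem_nseq => /andP [_ /eqP ->]; split; [lia | by rewrite Hcc1 Hcn].
- lia.
- rewrite sumn_cat !sumn_nseq mulnDl mul1n addnA -mulnDr subnK; last lia.
  rewrite /r (mulnC c k) (mulnC a n); lia.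
Qed.
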